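(* Let $R$ be a ring with unity and involution $*$, and let $a\in R$ be Moore-Penrose invertible with Moore-Penrose inverse $a^{\dagger}$. Then there exist $a_1,a_2\in R$ with $aa^*=a_1+a_2$ such that (1) $a_1$ is left dual core invertible, (2) $a_2^2=0$, (3) $a_2^*a_1=0=a_1a_2$. In addition, $a^*a$ is left dual core invertible and $a^{\dagger}(a^{\dagger})^*$ is a left dual core inverse of $a^*a$.
   Context: The Moore-Penrose inverse $a^\dagger$ is the unique $x\in R$ with $axa=a$, $xax=x$, $(ax)^*=ax$, $(xa)^*=xa$. An element $y$ is left dual core invertible if there exists $z\in R$ with $yzy=y$, $(zy)^*=zy$ and $z^2y=z$; such $z$ is a left dual core inverse of $y$. *)

(* Defs.v *)
From mathcomp Require Import all_boot all_algebra.
Set Implicit Arguments. Unset Strict Implicit. Unset Printing Implicit Defensive.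
Import GRing.Theory.
Local Open Scope ring_scope.

Definition is_involution (R : pzRingType) (st : R -> R) : Prop :=
  (forall x y, st (x + y) = st x + st y) /\
  (forall x y, st (x * y) = st y * st x) /\
  (forall x, st (st x) = x).

Definition is_MP_inverse (R : pzRingType) (st : R -> R) (a x : R) : Prop :=
  [/\ a * x * a = a, x * a * x = x, st (a * x) = a * x & st (x * a) = x * a].

Definition MP_invertible (R : pzRingType) (st : R -> R) (a : R) : Prop :=
  exists x, is_MP_inverse st a x.

Definition is_left_dual_core_inverse (R : pzRingType) (st : R -> R) (y z : R) : Prop :=
  [/\ y * z * y = y, st (z * y) = z * y & z ^+ 2 * y = z].

Definition left_dual_core_invertible (R : pzRingType) (st : R -> R) (y : R) : Prop :=
  exists z, is_left_dual_core_inverse st y z.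

(* Main.v *)
Require Import Defs.
From mathcomp Require Import all_boot all_algebra.
Import GRing.Theory.
Local Open Scope ring_scope.

Theorem corollary3p15 (R : pzRingType) (st : R -> R) (a ad : R)
  (hst : is_involution st) (had : is_MP_inverse st a ad) :
  (exists a1 a2 : R,
     [/\ a * st a = a1 + a2,
         left_dual_core_invertible st a1,
         a2 ^+ 2 = 0,
         st a2 * a1 = 0 & a1 * a2 = 0]) /\
  is_left_dual_core_inverse st (st a * a) (ad * st ad).
Proof.
case: hst => sD [sM sK]; case: had => A B C D.
have s0 : st 0 = 0.
  by have := sD 0 0; rewrite addr0 => h; apply: (addrI (st 0)); rewrite -h addr0.
have E1 : forall t, t * st ad * st a = t * a * ad.
  by move=> t; rewrite -mulrA -sM C mulrA.
have E2 : forall t, t * st a * st ad = t * ad * a.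
  by move=> t; rewrite -mulrA -sM D mulrA.
have E3 : forall t, t * st a * a * ad = t * st a.
  by move=> t; rewrite -!mulrA -C -sM A.
have E4 : forall t, t * ad * a * st a = t * st a.
  by move=> t; rewrite -!mulrA (mulrA ad) -D -sM mulrA A.
have E5 : forall t, t * st ad * ad * a = t * st ad.
  by move=> t; rewrite -!mulrA -D -sM B.
have A' : forall t, t * a * ad * a = t * a by move=> t; rewrite -!mulrA (mulrA a) A.
have B' : forall t, t * ad * a * ad = t * ad by move=> t; rewrite -!mulrA (mulrA ad) B.
split.
  exists (a * st a), 0; split.
  - by rewrite addr0.
  - exists (st ad * ad); split.
    + by rewrite !mulrA E2 E4 A.
    + by rewrite !mulrA E4 -(mul1r (st ad)) E1 mul1r C.
    + by rewrite expr2 !mulrA E4 E1 B'.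
  - by rewrite expr2 mulr0.
  - by rewrite s0 mul0r.
  - by rewrite mulr0.
split.
- by rewrite !mulrA E1 !A'.
- by rewrite !mulrA E1 B D.
- by rewrite expr2 !mulrA E1 B' E5.
Qed.
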